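(* Let $\mathbf B^{(1)}\in\mathbb Q^{d\times n}$ be an LLL-reduced basis and $\gamma\ge2$. Then $\mathbf B^{(2)}=(\mathbf b_1^{(2)},\dots,\mathbf b_n^{(2)}):=A_{\mathbf B^{(1)},\gamma}\mathbf B^{(1)}$ is LLL-reduced, and for all $i$, \[ \|\mathbf b_1^{(2)}\|/2^n\le\|\tilde{\mathbf b}_i^{(2)}\|\le\|\mathbf b_i^{(2)}\|\le(2\gamma)^i\|\mathbf b_1^{(2)}\|. \]
   Context: Gram–Schmidt orthogonalization of a basis $\mathbf B=(\mathbf b_1,\dots,\mathbf b_n)$: $\tilde{\mathbf b}_1=\mathbf b_1$, $\tilde{\mathbf b}_i=\Pi_{\{\mathbf b_1,\dots,\mathbf b_{i-1}\}^\perp}(\mathbf b_i)$; $\mu_{i,j}:=\langle\tilde{\mathbf b}_i,\mathbf b_j\rangle/\|\tilde{\mathbf b}_i\|^2$. $\mathbf B$ is LLL-reduced if $|\mu_{i,j}|\le 1/2$ for all $i<j$ and $\tfrac34\|\tilde{\mathbf b}_i\|^2\le\|\tilde{\mathbf b}_{i+1}\|^2+\mu_{i,i+1}^2\|\tilde{\mathbf b}_i\|^2$ for $1\le i\le n-1$. For a basis $\mathbf B$ and $\gamma\ge1$: $\alpha_1=1$, $\alpha_i=\max\{\alpha_{i-1},\lceil\|\tilde{\mathbf b}_i\|/(\gamma^i\|\mathbf b_1\|)\rceil\}$, and $A_{\mathbf B,\gamma}$ is the unique linear map with $A_{\mathbf B,\gamma}\tilde{\mathbf b}_i=\tilde{\mathbf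 b}_i/\alpha_i$ for all $i$ and identity on $\{\mathbf b_1,\dots,\mathbf b_n\}^\perp$. *)

(* Defs.v *)
From HB Require Import structures.
From mathcomp Require Import all_boot all_order all_algebra.
From mathcomp Require Import reals.
Set Implicit Arguments. Unset Strict Implicit. Unset Printing Implicit Defensive.
Import Order.TTheory GRing.Theory Num.Theory.
Local Open Scope ring_scope.

Section LLLDefs.
Variable R : realType.

Definition dotv d (u v : 'cV[R]_d) : R := \sum_(i < d) u i 0 * v i 0.
Definition normv d (u : 'cV[R]_d) : R := Num.sqrt (dotv u u).

(* the basis vectors b_1,...,b_n are the columns of B : 'M_(d,n);
   the paper's index i (1-based) is the ordinal j : 'I_n with i = j+1 *)
Definition cols d n (B : 'M[R]_(d, n)) : seq 'cV[R]_d :=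
  [seq col j B | j <- enum 'I_n].

Fixpoint gs_aux d (acc s : seq 'cV[R]_d) : seq 'cV[R]_d :=
  match s with
  | [::] => acc
  | x :: s' =>
      gs_aux (rcons acc (x - \sum_(v <- acc) (dotv x v / dotv v v) *: v)) s'
  end.

Definition gso d n (B : 'M[R]_(d, n)) (j : 'I_n) : 'cV[R]_d :=
  nth 0 (gs_aux [::] (cols B)) j.

Definition gs_mu d n (B : 'M[R]_(d, n)) (i j : 'I_n) : R :=
  dotv (gso B i) (col j B) / dotv (gso B i) (gso B i).

Definition LLL_reduced d n (B : 'M[R]_(d, n)) : Prop :=
  (forall i j : 'I_n, (i < j)%N -> `|gs_mu B i j| <= 1/2) /\
  (forall i j : 'I_n, j = i.+1 :> nat ->
     3/4 * normv (gso B i) ^+ 2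
       <= normv (gso B j) ^+ 2 + gs_mu B i j ^+ 2 * normv (gso B i) ^+ 2).

(* alpha_1 = 1,
   alpha_i = max(alpha_{i-1}, ceil(||bt_i|| / (gamma^i ||b_1||))),
   here alpha_nat k = alpha_{k+1} (0-based k). *)
Fixpoint alpha_nat d n (B : 'M[R]_(d, n)) (gamma : R) (k : nat) : R :=
  match k with
  | 0 => 1
  | k'.+1 =>
      Num.max (alpha_nat B gamma k')
        (Num.ceil (normv (nth 0 (gs_aux [::] (cols B)) k) /
                   (gamma ^+ k.+1 * normv (nth 0 (cols B) 0))))%:~R
  end.

Definition alpha d n (B : 'M[R]_(d, n)) (gamma : R) (j : 'I_n) : R :=
  alpha_nat B gamma j.

Definition is_A_map d n (B : 'M[R]_(d, n)) (gamma : R) (A : 'M[R]_d) : Prop :=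
  (forall j : 'I_n, A *m gso B j = (alpha B gamma j)^-1 *: gso B j) /\
  (forall x : 'cV[R]_d, (forall j : 'I_n, dotv x (col j B) = 0) -> A *m x = x).

End LLLDefs.

(* Main.v *)
Require Import Defs.
From HB Require Import structures.
From mathcomp Require Import all_boot all_order all_algebra.
From mathcomp Require Import reals.
From mathcomp Require Import ring lra zify.
Set Implicit Arguments. Unset Strict Implicit. Unset Printing Implicit Defensive.
Import Order.TTheory GRing.Theory Num.Theory.
Local Open Scope ring_scope.


Section Aux.
Variable R : realType.
Variable d : nat.
Implicit Types u v w : 'cV[R]_d.

Lemma dotvC u v : dotv u v = dotv v u.
Proof. by rewrite /dotv; apply: eq_bigr => i _; rewrite mulrC. Qed.

Lemma dotvDl u v w : dotv (u + v) w = dotv u w + dotv v w.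
Proof. by rewrite /dotv -big_split; apply: eq_bigr => i _; rewrite mxE mulrDl. Qed.

Lemma dotvZl a u v : dotv (a *: u) v = a * dotv u v.
Proof. by rewrite /dotv mulr_sumr; apply: eq_bigr => i _; rewrite mxE mulrA. Qed.

Lemma dotvNl u v : dotv (- u) v = - dotv u v.
Proof. by rewrite -scaleN1r dotvZl mulN1r. Qed.

Lemma dotvBl u v w : dotv (u - v) w = dotv u w - dotv v w.
Proof. by rewrite dotvDl dotvNl. Qed.

Lemma dotv0l v : dotv 0 v = 0.
Proof. by rewrite /dotv big1 // => i _; rewrite mxE mul0r. Qed.

Lemma dotv_suml I (r : seq I) (P : pred I) (F : I -> 'cV[R]_d) v :
  dotv (\sum_(i <- r | P i) F i) v = \sum_(i <- r | P i) dotv (F i) v.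
Proof.
elim/big_rec2: _ => [|i x y _ <-]; first by rewrite dotv0l.
by rewrite dotvDl.
Qed.

Lemma dotvDr u v w : dotv w (u + v) = dotv w u + dotv w v.
Proof. by rewrite dotvC dotvDl !(dotvC w). Qed.
Lemma dotvZr a u v : dotv v (a *: u) = a * dotv v u.
Proof. by rewrite dotvC dotvZl dotvC. Qed.
Lemma dotvBr u v w : dotv w (u - v) = dotv w u - dotv w v.
Proof. by rewrite dotvC dotvBl !(dotvC w). Qed.
Lemma dotv_sumr I (r : seq I) (P : pred I) (F : I -> 'cV[R]_d) v :
  dotv v (\sum_(i <- r | P i) F i) = \sum_(i <- r | P i) dotv v (F i).
Proof. by rewrite dotvC dotv_suml; apply: eq_bigr => i _; rewrite dotvC. Qed.

Lemma dotv_ge0 u : 0 <= dotv u u.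
Proof. by apply: sumr_ge0 => i _; rewrite -expr2 sqr_ge0. Qed.

Lemma dotv_eq0 u : dotv u u = 0 -> u = 0.
Proof.
move=> H; apply/matrixP => i k; rewrite mxE ord1.
have H0 : forall j, xpredT j -> 0 <= u j 0 * u j 0.
  by move=> j _; rewrite -expr2 sqr_ge0.
have := psumr_eq0P H0 H (i := i) erefl.
by move/eqP; rewrite mulf_eq0 orbb => /eqP.
Qed.

Lemma dotv_zero_l u v : dotv u u = 0 -> dotv u v = 0.
Proof. by move/dotv_eq0 ->; rewrite dotv0l. Qed.

Lemma normv_sq u : normv u ^+ 2 = dotv u u.
Proof. by rewrite /normv sqr_sqrtr // dotv_ge0. Qed.

Lemma normv_ge0 u : 0 <= normv u.
Proof. exact: sqrtr_ge0. Qed.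

Lemma gs_aux_rcons (acc s : seq 'cV[R]_d) x :
  gs_aux acc (rcons s x) =
  rcons (gs_aux acc s) (x - \sum_(v <- gs_aux acc s) (dotv x v / dotv v v) *: v).
Proof. by elim: s acc => [|y s IH] acc //=. Qed.

Lemma size_gs_aux (acc s : seq 'cV[R]_d) : size (gs_aux acc s) = (size acc + size s)%N.
Proof. by elim: s acc => [|y s IH] acc /=; rewrite ?addn0 // IH size_rcons addSnnS. Qed.

Lemma gs_aux_cat (acc s t : seq 'cV[R]_d) : exists t', gs_aux acc (s ++ t) = gs_aux acc s ++ t'.
Proof.
elim/last_ind: t => [|t x [t' IH]]; first by exists [::]; rewrite !cats0.
exists (rcons t' (x - \sum_(v <- gs_aux acc (s ++ t)) (dotv x v / dotv v v) *: v)).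
by rewrite -rcons_cat gs_aux_rcons IH rcons_cat.
Qed.

Lemma gs_rec (s : seq 'cV[R]_d) (j : nat) : (j < size s)%N ->
  let g := fun i => nth 0 (gs_aux [::] s) i in
  g j = nth 0 s j - \sum_(i < j) (dotv (nth 0 s j) (g i) / dotv (g i) (g i)) *: g i.
Proof.
move=> js g.
have [t1 E1] := gs_aux_cat [::] (take j.+1 s) (drop j.+1 s).
have [t2 E2] := gs_aux_cat [::] (take j s) (drop j s).
rewrite !cat_take_drop in E1 E2.
have sj : size (gs_aux [::] (take j s)) = j.
  by rewrite size_gs_aux /= size_takel // ltnW.
have Ep : gs_aux [::] (take j s) = mkseq g j.
  apply: (@eq_from_nth _ 0); first by rewrite size_mkseq.
  move=> i; rewrite sj => ij; rewrite nth_mkseq // /g E2 nth_cat sj ij //.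
have -> : g j = nth 0 (gs_aux [::] s) j by [].
rewrite E1 (take_nth 0 js) gs_aux_rcons nth_cat size_rcons sj ltnSn.
rewrite nth_rcons sj ltnn eqxx Ep /mkseq big_map.
have -> : iota 0 j = index_iota 0 j by rewrite /index_iota subn0.
by rewrite big_mkord.
Qed.


Definition orth (m : nat) (c : nat -> 'cV[R]_d) :=
  forall k l, (k < m)%N -> (l < m)%N -> k != l -> dotv (c k) (c l) = 0.

Lemma dot_orth_sum m c (a : nat -> R) l j : orth m c -> (l < m)%N -> (j <= m)%N ->
  dotv (c l) (\sum_(k < j) a k *: c k) = if (l < j)%N then a l * dotv (c l) (c l) else 0.
Proof.
move=> oc lm jm; rewrite dotv_sumr; case: ifP => lj.
  rewrite (bigD1 (Ordinal lj)) //= dotvZr big1 ?addr0 //.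
  move=> k /eqP kl; rewrite dotvZr oc ?mulr0 //.
  - exact: leq_trans (ltn_ord k) jm.
  - by apply/eqP => E; apply: kl; apply: val_inj; rewrite /= E.
rewrite big1 // => k _; rewrite dotvZr oc ?mulr0 //.
- exact: leq_trans (ltn_ord k) jm.
- by apply/eqP => E; move: (ltn_ord k); rewrite -E lj.
Qed.

Section GS.
Variables (m : nat) (s g : nat -> 'cV[R]_d).
Hypothesis Hrec : forall j, (j < m)%N ->
  g j = s j - \sum_(i < j) (dotv (s j) (g i) / dotv (g i) (g i)) *: g i.

Lemma gs_orth_lt j i : (i < j)%N -> (j < m)%N -> dotv (g i) (g j) = 0.
Proof.
elim/ltn_ind: j i => j IH i ij jm.
rewrite (Hrec jm) dotvBr dotv_sumr (bigD1 (Ordinal ij)) //= big1.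
  rewrite addr0 dotvZr (dotvC (s j)).
  have [D0|D0] := eqVneq (dotv (g i) (g i)) 0.
    by rewrite (dotv_zero_l _ D0) mul0r mul0r subrr.
  by rewrite mulfVK // subrr.
move=> k /eqP kl; rewrite dotvZr.
have kj := ltn_ord k.
have [ik|ki|ik] := ltngtP i k.
- by rewrite (IH k kj i ik (ltn_trans kj jm)) mulr0.
- by rewrite (dotvC (g i)) (IH i ij k ki (ltn_trans ij jm)) mulr0.
- by exfalso; apply: kl; apply: val_inj; rewrite /= ik.
Qed.

Lemma gs_orth : orth m g.
Proof.
move=> k l km lm kl; have [h|h|h] := ltngtP k l.
- exact: gs_orth_lt.
- by rewrite dotvC gs_orth_lt.
- by rewrite h eqxx in kl.
Qed.

Lemma gs_decomp j : (j < m)%N ->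
  s j = g j + \sum_(i < j) (dotv (g i) (s j) / dotv (g i) (g i)) *: g i.
Proof.
move=> jm; rewrite (Hrec jm).
have -> : \sum_(i < j) (dotv (g i) (s j) / dotv (g i) (g i)) *: g i =
   \sum_(i < j) (dotv (s j) (g i) / dotv (g i) (g i)) *: g i.
  by apply: eq_bigr => i _; rewrite dotvC.
by rewrite subrK.
Qed.

Lemma gs_unique (c : nat -> 'cV[R]_d) (a : nat -> nat -> R) :
  orth m c -> (forall j, (j < m)%N -> s j = c j + \sum_(i < j) a j i *: c i) ->
  forall j, (j < m)%N -> g j = c j.
Proof.
move=> oc Hs; elim/ltn_ind => j IH jm.
rewrite (Hrec jm).
have -> : \sum_(i < j) (dotv (s j) (g i) / dotv (g i) (g i)) *: g i =
          \sum_(i < j) a j i *: c i.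
  apply: eq_bigr => i _; have ij := ltn_ord i.
  have im : (i < m)%N := ltn_trans ij jm.
  rewrite IH // dotvC (Hs j jm) dotvDr oc ?(ltn_eqF ij) // add0r.
  rewrite (dot_orth_sum _ oc im (ltnW jm)) ij.
  have [D0|D0] := eqVneq (dotv (c i) (c i)) 0.
    by rewrite (dotv_eq0 D0) !scaler0.
  by rewrite mulfK.
by rewrite (Hs j jm) addrK.
Qed.

End GS.


Lemma le_from_sq (x y : R) : 0 <= x -> 0 <= y -> x ^+ 2 <= y ^+ 2 -> x <= y.
Proof. by move=> x0 y0; rewrite ler_pXn2r ?nnegrE. Qed.

Lemma normvZ a u : normv (a *: u) = `|a| * normv u.
Proof.
have h : normv (a *: u) ^+ 2 = (`|a| * normv u) ^+ 2.
  by rewrite exprMn real_normK ?num_real // !normv_sq dotvZl dotvZr mulrA expr2.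
have n1 := normv_ge0 (a *: u); have n2 : 0 <= `|a| * normv u.
  by rewrite mulr_ge0 ?normr_ge0 ?normv_ge0.
apply/eqP; rewrite eq_le; apply/andP; split; apply: le_from_sq => //; by rewrite h.
Qed.

Lemma pyth m c (a : nat -> R) j : orth m c -> (j < m)%N ->
  dotv (c j + \sum_(i < j) a i *: c i) (c j + \sum_(i < j) a i *: c i) =
  dotv (c j) (c j) + \sum_(i < j) a i ^+ 2 * dotv (c i) (c i).
Proof.
move=> oc jm.
rewrite dotvDl dotv_suml dotvDr (dot_orth_sum _ oc jm (ltnW jm)) ltnn addr0.
congr (_ + _); apply: eq_bigr => i _.
have im : (i < m)%N := ltn_trans (ltn_ord i) jm.
rewrite dotvZl dotvDr (dot_orth_sum _ oc im (ltnW jm)) ltn_ord.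
by rewrite oc ?(ltn_eqF (ltn_ord i)) // add0r mulrA expr2.
Qed.

End Aux.



Section Mat.
Variable R : realType.
Variables d n : nat.

Lemma size_cols (B : 'M[R]_(d, n)) : size (cols B) = n.
Proof. by rewrite size_map size_enum_ord. Qed.

Lemma cols_nth (B : 'M[R]_(d, n)) (j : 'I_n) : nth 0 (cols B) j = col j B.
Proof. by rewrite (nth_map j) ?size_enum_ord // nth_ord_enum. Qed.

Lemma col_mulmx (A : 'M[R]_d) (B : 'M[R]_(d, n)) j : col j (A *m B) = A *m col j B.
Proof. by rewrite !colE mulmxA. Qed.

Lemma rank_col_neq0 (B : 'M[R]_(d, n)) (k : 'I_n) : \rank B = n -> col k B != 0.
Proof.
move=> rB; apply/negP => /eqP ck.
have h : (delta_mx 0 k : 'rV[R]_n) *m B^T = 0.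
  by rewrite -trmx_delta -trmx_mul -colE ck trmx0.
have := mxrankS (introT sub_kermxP h); rewrite mxrank_ker mxrank_tr rB subnn rank_rV.
rewrite leqn0 eqb0 negbK => /eqP /matrixP /(_ 0 k).
rewrite !mxE !eqxx /= => /eqP; by rewrite oner_eq0.
Qed.

End Mat.



Lemma lov_scale (R : realType) (t X Y m : R) : 0 <= t -> 3/4 * X <= Y + m * X ->
  3/4 * (t*X) <= t*Y + m*(t*X).
Proof.
move=> t0 h.
have E1 : 3/4*(t*X) = t*(3/4*X) by ring.
have E2 : t*Y + m*(t*X) = t*(Y + m*X) by ring.
by rewrite E1 E2; apply: ler_wpM2l.
Qed.

Lemma sq_half (R : realType) (x : R) : `|x| <= 1/2 -> x ^+ 2 <= 1/4.
Proof.
move=> h; rewrite -real_normK ?num_real //.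
have -> : (1/4 : R) = (1/2) ^+ 2 by rewrite expr2; field.
by apply: lerXn2r; rewrite ?nnegrE // divr_ge0 ?ler0n.
Qed.

Section Core.
Variable R : realType.
Variables d n : nat.
Variable B1 : 'M[R]_(d, n).
Variable gamma : R.
Variable A : 'M[R]_d.
Hypothesis Hcol : forall k : 'I_n, col k B1 != 0.
Hypothesis HLLL : LLL_reduced B1.
Hypothesis Hg : 2 <= gamma.
Hypothesis HA : is_A_map B1 gamma A.

Let B2 := A *m B1.
Let s1 k := nth 0 (cols B1) k.
Let g1 k := nth 0 (gs_aux [::] (cols B1)) k.
Let s2 k := nth 0 (cols B2) k.
Let g2 k := nth 0 (gs_aux [::] (cols B2)) k.
Let al k := alpha_nat B1 gamma k.
Let c k := (al k)^-1 *: g1 k.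
Let mu k j := dotv (g1 k) (s1 j) / dotv (g1 k) (g1 k).

Lemma rec1 j : (j < n)%N ->
  g1 j = s1 j - \sum_(i < j) (dotv (s1 j) (g1 i) / dotv (g1 i) (g1 i)) *: g1 i.
Proof. by move=> jn; apply: (gs_rec (s := cols B1)); rewrite size_cols. Qed.

Lemma rec2 j : (j < n)%N ->
  g2 j = s2 j - \sum_(i < j) (dotv (s2 j) (g2 i) / dotv (g2 i) (g2 i)) *: g2 i.
Proof. by move=> jn; apply: (gs_rec (s := cols B2)); rewrite size_cols. Qed.

Lemma al_ge1 k : 1 <= al k.
Proof.
elim: k => [|k IH]; first by rewrite /al /=.
by rewrite /al /= le_max IH.
Qed.

Lemma al_gt0 k : 0 < al k.
Proof. exact: lt_le_trans ltr01 (al_ge1 k). Qed.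

Lemma Ag k : (k < n)%N -> A *m g1 k = c k.
Proof. by move=> kn; have := HA.1 (Ordinal kn). Qed.

Lemma s2E j : (j < n)%N -> s2 j = A *m s1 j.
Proof.
move=> jn; rewrite /s2 /s1 -[j]/(nat_of_ord (Ordinal jn)) !cols_nth.
exact: col_mulmx.
Qed.

Lemma s1dec j : (j < n)%N -> s1 j = g1 j + \sum_(i < j) mu i j *: g1 i.
Proof. exact: (gs_decomp rec1). Qed.

Lemma s2dec j : (j < n)%N -> s2 j = c j + \sum_(i < j) mu i j *: c i.
Proof.
move=> jn; rewrite s2E // s1dec // mulmxDr Ag // mulmx_sumr; congr (_ + _).
apply: eq_bigr => i _; rewrite -scalemxAr Ag //.
exact: ltn_trans (ltn_ord i) jn.
Qed.

Lemma orth_c : orth n c.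
Proof.
move=> k l kn ln kl; rewrite /c dotvZl dotvZr (gs_orth rec1 kn ln kl).
by rewrite !mulr0.
Qed.

Lemma g2E j : (j < n)%N -> g2 j = c j.
Proof. exact: (gs_unique rec2 orth_c (a := fun j i => mu i j) s2dec). Qed.

Lemma Dc k : dotv (c k) (c k) = (al k)^-1 ^+ 2 * dotv (g1 k) (g1 k).
Proof. by rewrite /c dotvZl dotvZr mulrA expr2. Qed.

Lemma mu2E i j : (i < j)%N -> (j < n)%N ->
  dotv (c i) (s2 j) / dotv (c i) (c i) =
  mu i j * (dotv (c i) (c i) / dotv (c i) (c i)).
Proof.
move=> ij jn; have im := ltn_trans ij jn.
rewrite s2dec // dotvDr orth_c ?(ltn_eqF ij) // add0r.
by rewrite (dot_orth_sum (fun k => mu k j) orth_c im (ltnW jn)) ij mulrA.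
Qed.


Lemma mu_ord (i j : 'I_n) : gs_mu B1 i j = mu i j.
Proof. by rewrite /gs_mu /mu /s1 cols_nth. Qed.

Lemma mu2_ord (i j : 'I_n) : gs_mu B2 i j = dotv (c i) (s2 j) / dotv (c i) (c i).
Proof. by rewrite /gs_mu /s2 cols_nth; have -> : gso B2 i = c i := g2E (ltn_ord i). Qed.

Lemma H1 i j : (i < j)%N -> (j < n)%N -> `|mu i j| <= 1/2.
Proof.
move=> ij jn; have := HLLL.1 (Ordinal (ltn_trans ij jn)) (Ordinal jn) ij.
by rewrite mu_ord.
Qed.

Lemma H2 k (kn : (k.+1 < n)%N) :
  3/4 * dotv (g1 k) (g1 k) <= dotv (g1 k.+1) (g1 k.+1) + mu k k.+1 ^+ 2 * dotv (g1 k) (g1 k).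
Proof.
have := HLLL.2 (Ordinal (ltnW kn)) (Ordinal kn) erefl.
by rewrite mu_ord !normv_sq.
Qed.

Lemma mu2sq i j : (i < j)%N -> (j < n)%N ->
  (dotv (c i) (s2 j) / dotv (c i) (c i)) ^+ 2 * dotv (c i) (c i) =
  mu i j ^+ 2 * dotv (c i) (c i).
Proof.
move=> ij jn; rewrite mu2E //.
have [D0|D0] := eqVneq (dotv (c i) (c i)) 0; first by rewrite D0 !mulr0.
by rewrite divff // mulr1.
Qed.

Lemma mu2abs i j : (i < j)%N -> (j < n)%N ->
  `|dotv (c i) (s2 j) / dotv (c i) (c i)| <= 1/2.
Proof.
move=> ij jn; rewrite mu2E //.
have [D0|D0] := eqVneq (dotv (c i) (c i)) 0.
  by rewrite D0 mul0r mulr0 normr0 divr_ge0 ?ler0n.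
by rewrite divff // mulr1 H1.
Qed.

Lemma N0_gt0 : (0 < n)%N -> 0 < normv (s1 0).
Proof.
move=> n0; rewrite lt_neqAle normv_ge0 andbT eq_sym; apply/eqP => h.
have := Hcol (Ordinal n0); rewrite -cols_nth /=.
have : dotv (s1 0) (s1 0) = 0 by rewrite -normv_sq h expr2 mulr0.
by move/dotv_eq0; rewrite /s1 => ->; rewrite eqxx.
Qed.

Lemma g10 : (0 < n)%N -> g1 0 = s1 0.
Proof. by move=> n0; rewrite rec1 // big_ord0 subr0. Qed.

Lemma c0 : (0 < n)%N -> c 0 = s1 0.
Proof. by move=> n0; rewrite /c /al /= invr1 scale1r g10. Qed.

Lemma normc k : normv (c k) = (al k)^-1 * normv (g1 k).
Proof. by rewrite /c normvZ ger0_norm // invr_ge0 ltW // al_gt0. Qed.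

Lemma ub k : (k < n)%N -> normv (c k) <= gamma ^+ k.+1 * normv (s1 0).
Proof.
case: k => [|k] kn.
  rewrite c0 // expr1; apply: ler_peMl; first exact: normv_ge0.
  by apply: le_trans Hg; rewrite ler1n.
rewrite normc.
have P0 : 0 < gamma ^+ k.+2 * normv (s1 0).
  rewrite mulr_gt0 ?N0_gt0 ?exprn_gt0 //; last exact: ltn_trans kn.
  by apply: lt_le_trans Hg; rewrite ltr0n.
have hx : normv (g1 k.+1) / (gamma ^+ k.+2 * normv (s1 0)) <= al k.+1.
  by rewrite /al /= le_max; apply/orP; right; exact: ceil_ge.
rewrite ler_pdivrMr // in hx.
by rewrite mulrC ler_pdivrMr ?al_gt0 // mulrC.
Qed.


Lemma cmono k : (k.+1 < n)%N -> al k.+1 != al k -> normv (c k) <= normv (c k.+1).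
Proof.
move=> kn E.
have hk := ub (ltnW kn).
set x := normv (g1 k.+1) / (gamma ^+ k.+2 * normv (s1 0)).
set z := Num.ceil x.
have alE : al k.+1 = Num.max (al k) z%:~R by [].
have [hlt alz] : al k < z%:~R /\ al k.+1 = z%:~R.
  move: E; rewrite alE maxEle; case: ifP => hle; last by rewrite eqxx.
  by move=> ne; split => //; rewrite lt_neqAle hle andbT eq_sym.
have z1 : 1 < z by rewrite -(ltr1z R); exact: le_lt_trans (al_ge1 k) hlt.
have z2 : (2 : int) <= z by lia.
have h2 : (2 : R) <= z%:~R by rewrite -[2 : R]/((2:int)%:~R) ler_int.
have zx : z%:~R - 1 < x by have := ceilB1_lt x; rewrite intrB.
have n0 : (0 < n)%N by exact: ltn_trans kn.
have P0 : 0 < gamma ^+ k.+2 * normv (s1 0).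
  rewrite mulr_gt0 ?N0_gt0 ?exprn_gt0 //.
  by apply: lt_le_trans Hg; rewrite ltr0n.
have Ng : normv (g1 k.+1) = x * (gamma ^+ k.+2 * normv (s1 0)).
  by rewrite /x divfK // gt_eqF.
have z0 : 0 < (z%:~R : R) by apply: lt_le_trans h2; rewrite ltr0n.
apply: (le_trans hk).
apply: (@le_trans _ _ ((gamma ^+ k.+2 * normv (s1 0)) / 2)).
  have -> : (gamma ^+ k.+2 * normv (s1 0)) / 2 = gamma / 2 * (gamma ^+ k.+1 * normv (s1 0)).
    by rewrite exprS; ring.
  apply: ler_peMl; first by rewrite mulr_ge0 ?normv_ge0 // exprn_ge0 // (le_trans _ Hg) // ler0n.
  rewrite ler_pdivlMr ?ltr0n //.
by rewrite mul1r.
rewrite normc alz Ng (mulrC (z%:~R)^-1) ler_pdivlMr //.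
have hz : (z%:~R : R) <= 2 * x by lra.
have := ler_wpM2l (ltW (divr_gt0 P0 (ltr0Sn _ 1))) hz.
by have -> : gamma ^+ k.+2 * normv (s1 0) / 2 * (2 * x) = x * (gamma ^+ k.+2 * normv (s1 0)) by field.
Qed.

Lemma lov2 k : (k.+1 < n)%N ->
  3/4 * dotv (c k) (c k) <= dotv (c k.+1) (c k.+1) + mu k k.+1 ^+ 2 * dotv (c k) (c k).
Proof.
move=> kn.
have [E|E] := eqVneq (al k.+1) (al k).
  by rewrite !Dc E; apply: lov_scale; [exact: sqr_ge0 | exact: H2].
have hm := cmono kn E.
have : dotv (c k) (c k) <= dotv (c k.+1) (c k.+1).
  by rewrite -!normv_sq; apply: lerXn2r; rewrite ?nnegrE ?normv_ge0.
have h0 := dotv_ge0 (c k).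
have h3 : 0 <= mu k k.+1 ^+ 2 * dotv (c k) (c k) by rewrite mulr_ge0 ?sqr_ge0.
lra.
Qed.

Lemma halfstep k : (k.+1 < n)%N -> dotv (c k) (c k) <= 2 * dotv (c k.+1) (c k.+1).
Proof.
move=> kn; have := lov2 kn.
have hq := sq_half (H1 (ltnSn k) kn).
have h0 := dotv_ge0 (c k).
have := ler_wpM2r h0 hq.
lra.
Qed.

Lemma chain i : (i < n)%N -> dotv (c 0) (c 0) <= 2 ^+ i * dotv (c i) (c i).
Proof.
elim: i => [|i IH] iin; first by rewrite expr0 mul1r.
apply: (le_trans (IH (ltnW iin))).
rewrite exprS -mulrA (mulrC 2) -mulrA; apply: ler_wpM2l; first exact: exprn_ge0.
by rewrite mulrC halfstep.
Qed.


Lemma gsoB2 (i : 'I_n) : gso B2 i = c i.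
Proof. exact: g2E (ltn_ord i). Qed.

Lemma core_LLL : LLL_reduced B2.
Proof.
split.
  by move=> i j ij; rewrite mu2_ord; exact: mu2abs ij (ltn_ord j).
move=> i j ji; rewrite mu2_ord !normv_sq !gsoB2.
have jn := ltn_ord j; rewrite ji in jn *.
by rewrite mu2sq //; exact: lov2.
Qed.

Lemma s20 : (0 < n)%N -> s2 0 = s1 0.
Proof. by move=> n0; rewrite s2dec // big_ord0 addr0 c0. Qed.

Lemma Dk_le k i : (k <= i)%N -> (i < n)%N ->
  dotv (c k) (c k) <= (gamma ^+ i.+1 * normv (s1 0)) ^+ 2.
Proof.
move=> ki iin; rewrite -normv_sq; apply: lerXn2r; rewrite ?nnegrE ?normv_ge0 //.
  by rewrite mulr_ge0 ?normv_ge0 // exprn_ge0 // (le_trans _ Hg) // ler0n.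
apply: (le_trans (ub (leq_ltn_trans ki iin))); apply: ler_wpM2r; first exact: normv_ge0.
by rewrite ler_eXn2l // (lt_le_trans _ Hg) // ltr1n.
Qed.

Lemma core_bounds (i : 'I_n) :
  normv (s1 0) / 2 ^+ n <= normv (c i) /\
  normv (c i) <= normv (s2 i) /\
  normv (s2 i) <= (2 * gamma) ^+ i.+1 * normv (s1 0).
Proof.
have iin := ltn_ord i.
have n0 : (0 < n)%N by exact: leq_ltn_trans (leq0n i) iin.
have N0 := normv_ge0 (s1 0).
have g0 : 0 <= gamma by rewrite (le_trans _ Hg) // ler0n.
have pyt : dotv (s2 i) (s2 i) = dotv (c i) (c i) +
    \sum_(k < i) mu k i ^+ 2 * dotv (c k) (c k).
  by rewrite s2dec // (pyth (fun k => mu k i) orth_c iin).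
split; last split.
- apply: le_from_sq; rewrite ?normv_ge0 ?divr_ge0 ?exprn_ge0 ?ler0n //.
  rewrite normv_sq expr_div_n ler_pdivrMr ?exprn_gt0 ?ltr0n //.
  rewrite -(c0 n0) normv_sq; apply: (le_trans (chain iin)).
  rewrite mulrC; apply: ler_wpM2l; first exact: dotv_ge0.
  rewrite -exprM ler_eXn2l ?ltr1n //.
  by rewrite muln2 -addnn (leq_trans (ltnW iin)) // leq_addr.
- apply: le_from_sq; rewrite ?normv_ge0 // !normv_sq pyt lerDl.
  by apply: sumr_ge0 => k _; rewrite mulr_ge0 ?sqr_ge0 ?dotv_ge0.
- apply: le_from_sq; rewrite ?normv_ge0 ?mulr_ge0 ?exprn_ge0 ?mulr_ge0 ?ler0n //.
  set G := (gamma ^+ i.+1 * normv (s1 0)) ^+ 2.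
  rewrite normv_sq pyt.
  have hs : \sum_(k < i) mu k i ^+ 2 * dotv (c k) (c k) <= G *+ i.
    rewrite -[i in G *+ i]card_ord -sumr_const; apply: ler_sum => k _.
    have hk := ltn_ord k.
    have hq := sq_half (H1 hk iin).
    have hD := Dk_le (ltnW hk) iin.
    have hD0 := dotv_ge0 (c k).
    have := ler_wpM2r hD0 hq.
    rewrite -/G in hD; lra.
  have hi := Dk_le (leqnn i) iin; rewrite -/G in hi.
  apply: (le_trans (lerD hi hs)).
  have -> : ((2 * gamma) ^+ i.+1 * normv (s1 0)) ^+ 2 = 4 ^+ i.+1 * G.
    have e4 : (4:R) ^+ i.+1 = (2 ^+ i.+1) ^+ 2.
      by rewrite -exprAC; congr (_ ^+ _); rewrite expr2; ring.
    by rewrite /G e4 !exprMn; ring.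
  rewrite addrC -mulrSr -[G *+ i.+1]mulr_natl; apply: ler_wpM2r; first by rewrite /G sqr_ge0.
  by rewrite -natrX ler_nat ltnW // ltn_expl.
Qed.

End Core.


Theorem mainTheorem13 (R : realType) (d n : nat) (B : 'M[rat]_(d, n))
    (gamma : R) (A : 'M[R]_d) :
  let B1 : 'M[R]_(d, n) := map_mx (fun q : rat => ratr q) B in
  \rank B1 = n ->
  LLL_reduced B1 ->
  2 <= gamma ->
  is_A_map B1 gamma A ->
  let B2 := A *m B1 in
  LLL_reduced B2 /\
  (forall (i : 'I_n) (i0 : 'I_n), val i0 = 0%N ->
     normv (col i0 B2) / 2 ^+ n <= normv (gso B2 i) /\
     normv (gso B2 i) <= normv (col i B2) /\
     normv (col i B2) <= (2 * gamma) ^+ i.+1 * normv (col i0 B2)).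
Proof.
move=> B1 rk LLL g2 HA B2.
have Hcol : forall k : 'I_n, col k B1 != 0 by move=> k; exact: rank_col_neq0.
split; first exact: core_LLL Hcol LLL g2 HA.
move=> i i0 i00.
have n0 : (0 < n)%N by exact: leq_ltn_trans (leq0n i) (ltn_ord i).
have := core_bounds Hcol LLL g2 HA i; rewrite /=.
have E0 : col i0 B2 = nth 0 (cols B1) 0 by rewrite -cols_nth i00 /B2 (s20 HA n0).
have Ei : col i B2 = nth 0 (cols B2) i by rewrite cols_nth.
by rewrite E0 Ei /B2 (gsoB2 HA).
Qed.
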